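(* Let $\varphi:\Lambda\to\Gamma$ be a regular covering map of finite simplicial graphs with $\Gamma$ and $\Lambda$ connected. Let $v$ be a vertex of $\Gamma$, $B$ a connected component of $\Gamma\setminus\mathrm{st}(v)$, $\tilde B$ a connected component of $\varphi^{-1}(B)$, and $D=\bigcap_{u\in\varphi^{-1}(v)}C(u,\tilde B)$. Then either $\varphi^{-1}(B)\subseteq D$, or $C(u,\tilde B)=D$ for a vertex $u\in\varphi^{-1}(v)$ whose star is adjacent to $\tilde B$.
   Context: Graphs are finite simplicial graphs; subgraphs are induced. $\mathrm{st}(u)$ is the subgraph induced by $u$ and its neighbours. A covering map $\varphi:\Lambda\to\Gamma$ is a surjective simplicial map mapping the neighbours of each vertex $u$ bijectively onto the neighbours of $\varphi(u)$; regular means the group of graph automorphisms $\mu$ of $\Lambda$ with $\varphi\mu=\varphi$ acts transitively on each fiber. For a vertex $u$ of $\Lambda$ and a connected subgraph $A$ of $\Lambda$ disjoint from $\mathrm{st}(u)$, $C(u,A)$ denotes the component of $\Lambda\setminus\mathrm{st}(u)$ containing $A$. Two disjoint subgraphs are adjacent if some edge has one endpoint in each. *)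

(* Defs.v *)
From mathcomp Require Import all_boot.
Set Implicit Arguments. Unset Strict Implicit. Unset Printing Implicit Defensive.

Definition simple_graph (T : finType) (e : rel T) : Prop :=
  irreflexive e /\ symmetric e.

Definition connected_graph (T : finType) (e : rel T) : Prop :=
  forall x y, connect e x y.

Definition restrict (T : finType) (e : rel T) (S : {set T}) : rel T :=
  [rel x y | [&& x \in S, y \in S & e x y]].

(* Vertex set of the component of the induced subgraph on S containing x
   (empty if x \notin S). *)
Definition comp (T : finType) (e : rel T) (S : {set T}) (x : T) : {set T} :=
  [set y in S | connect (restrict e S) x y].

Definition is_component (T : finType) (e : rel T) (S A : {set T}) : Prop :=
  exists2 x, x \in S & A = comp e S x.

Definition st (T : finType) (e : rel T) (u : T) : {set T} :=
  [set w | (w == u) || e u w].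

(* C(u,A): component(s) of  Lambda \ st(u)  meeting A (for A connected and
   disjoint from st(u), this is the unique component containing A). *)
Definition Ccomp (T : finType) (e : rel T) (u : T) (A : {set T}) : {set T} :=
  \bigcup_(a in A) comp e (~: st e u) a.

Definition adjacent (T : finType) (e : rel T) (X Y : {set T}) : bool :=
  [exists x in X, exists y in Y, e x y].

Definition is_covering (V W : finType) (eL : rel V) (eG : rel W) (phi : V -> W) : Prop :=
  [/\ (forall y, exists x, phi x = y),
      (forall x y, eL x y -> eG (phi x) (phi y)),
      (forall u, {in [set w | eL u w] &, injective phi}) &
      (forall u, phi @: [set w | eL u w] = [set w | eG (phi u) w])].

Definition graph_aut (V : finType) (eL : rel V) (mu : V -> V) : Prop :=
  bijective mu /\ (forall x y, eL (mu x) (mu y) = eL x y).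

Definition is_regular_covering (V W : finType) (eL : rel V) (eG : rel W) (phi : V -> W) : Prop :=
  is_covering eL eG phi /\
  (forall x y, phi x = phi y ->
     exists mu, [/\ graph_aut eL mu, (forall z, phi (mu z) = phi z) & mu x = y]).

(* Main.v *)
Require Import Defs.
From mathcomp Require Import all_boot.
Set Implicit Arguments. Unset Strict Implicit. Unset Printing Implicit Defensive.
Notation compo := Defs.comp.

Lemma conn_closed (T : finType) (r : rel T) (P : T -> Prop) x y :
  (forall a b, r a b -> P a -> P b) -> P x -> connect r x y -> P y.
Proof.
move=> H Px /connectP [p pth ->]; elim: p x Px pth => //= a p IH x Px /andP[rxa pth].
exact: IH (H _ _ rxa Px) pth.
Qed.

Lemma conn_homo (T T' : finType) (r : rel T) (r' : rel T') (f : T -> T') x y :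
  (forall a b, r a b -> r' (f a) (f b)) -> connect r x y -> connect r' (f x) (f y).
Proof.
move=> H; apply: (conn_closed (P := fun z => connect r' (f x) (f z))) => // a b rab h.
exact: connect_trans h (connect1 (H _ _ rab)).
Qed.

Lemma conn_mono (T : finType) (r r' : rel T) x y :
  (forall a b, r a b -> r' a b) -> connect r x y -> connect r' x y.
Proof. exact: (conn_homo (f := id)). Qed.

Lemma restrictE (T : finType) (e : rel T) (S : {set T}) a b :
  restrict e S a b = [&& a \in S, b \in S & e a b].
Proof. by []. Qed.

Lemma restrict_csym (T : finType) (e : rel T) (S : {set T}) :
  symmetric e -> connect_sym (restrict e S).
Proof.
move=> se; apply: sym_connect_sym => a b; rewrite !restrictE se.
by case: (a \in S); case: (b \in S).
Qed.

Lemma restrict_in (T : finType) (e : rel T) (S : {set T}) x y :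
  connect (restrict e S) x y -> x \in S -> y \in S.
Proof.
move=> c xS; apply: (conn_closed (P := fun z => z \in S)) xS c => a b.
by rewrite restrictE => /and3P[].
Qed.

Lemma st_conn (T : finType) (e : rel T) (S : {set T}) w p :
  symmetric e -> p \in st e w -> st e w \subset S -> connect (restrict e S) w p.
Proof.
move=> se; rewrite /st inE => /orP[/eqP -> | ewp] sub; first exact: connect0.
apply: connect1; rewrite restrictE ewp andbT; apply/andP; split; apply: (subsetP sub);
  by rewrite inE ?eqxx ?ewp ?orbT.
Qed.

Lemma in_comp (T : finType) (e : rel T) (S : {set T}) x y :
  (y \in Defs.comp e S x) = (y \in S) && connect (restrict e S) x y.
Proof. by rewrite inE. Qed.
Theorem lemma3p7 (V W : finType) (eL : rel V) (eG : rel W) (phi : V -> W)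
  (hL : simple_graph eL) (hG : simple_graph eG)
  (cL : connected_graph eL) (cG : connected_graph eG)
  (hphi : is_regular_covering eL eG phi)
  (v : W) (B : {set W}) (Bt : {set V})
  (hB : is_component eG (~: st eG v) B)
  (hBt : is_component eL (phi @^-1: B) Bt) :
  let D := \bigcap_(u | phi u == v) Ccomp eL u Bt in
  (phi @^-1: B \subset D) \/
  (exists u, [/\ phi u = v, Ccomp eL u Bt = D & adjacent eL (st eL u) Bt]).
Proof.
move=> D.
move: hL hG hphi => [irrL symL] [irrG symG] [[surj ehom inj nbr] reg].
case: hB => b0 b0S HB; case: hBt => x0; rewrite inE => x0B HBt.
have preE : forall p, (p \in phi @^-1: B) = (phi p \in B) by move=> p; rewrite inE.
have HB1 : forall g, g \in B -> g \notin st eG v.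
  by move=> g; rewrite HB in_comp inE => /andP[].
have HB2 : forall g g', g \in B -> g' \notin st eG v -> eG g g' -> g' \in B.
  move=> g g'; rewrite HB !in_comp => /andP[gS c] g'S e; rewrite inE g'S /=.
  by apply: connect_trans c (connect1 _); rewrite restrictE gS inE g'S e.
have HB3 : forall g g', g \in B -> g' \in B -> connect (restrict eG (~: st eG v)) g g'.
  move=> g g'; rewrite HB !in_comp => /andP[_ c] /andP[_ c'].
  by apply: connect_trans c'; rewrite restrict_csym.
have Bt1 : forall z, z \in Bt -> phi z \in B.
  by move=> z; rewrite HBt in_comp inE => /andP[].
have Bt2 : forall z z', z \in Bt -> phi z' \in B -> eL z z' -> z' \in Bt.
  move=> z z'; rewrite HBt !in_comp => /andP[zS c] z'B e.
  have z'S : z' \in phi @^-1: B by rewrite inE.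
  rewrite z'S /=; by apply: connect_trans c (connect1 _); rewrite restrictE zS z'S e.
have Bt3 : forall z z', z \in Bt -> z' \in Bt -> connect (restrict eL (phi @^-1: B)) z z'.
  move=> z z'; rewrite HBt !in_comp => /andP[_ c] /andP[_ c'].
  by apply: connect_trans c'; rewrite restrict_csym.
have x0Bt : x0 \in Bt by rewrite HBt in_comp inE x0B connect0.
have stv : forall u p, phi u = v -> p \in st eL u -> phi p \in st eG v.
  move=> u p Hu; rewrite !inE -Hu => /orP[/eqP -> | e]; first by rewrite eqxx.
  by rewrite ehom ?orbT.
have preS : forall u p, phi u = v -> phi p \in B -> p \in ~: st eL u.
  move=> u p Hu pB; rewrite inE; apply/negP => /(stv _ _ Hu) pst.
  by move: (HB1 _ pB); rewrite pst.
have disj : forall u w p, phi u = v -> phi w = v -> p \in st eL u -> p \in st eL w -> u = w.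
  move=> u w p Hu Hw; rewrite !inE => /orP[/eqP pu | eu] /orP[/eqP pw | ew].
  - by rewrite -pu -pw.
  - by move: (ehom _ _ ew); rewrite pu Hu Hw irrG.
  - by move: (ehom _ _ eu); rewrite pw Hu Hw irrG.
  - apply: (inj p); rewrite ?inE 1?symL // 1?symL //; by rewrite Hu Hw.
have lift_nb : forall z g, eG (phi z) g -> exists2 z', eL z z' & phi z' = g.
  move=> z g e; have : g \in [set w | eG (phi z) w] by rewrite inE.
  by rewrite -nbr => /imsetP [z' ]; rewrite inE => ? ->; exists z'.
have step : forall z z', z \in Bt -> eL z z' ->
    z' \in Bt \/ exists2 w, phi w = v & z' \in st eL w.
  move=> z z' zB e; case z'B: (phi z' \in B); first by left; exact: Bt2 z'B e.
  right; case z'st: (phi z' \in st eG v); last first.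
    by move: z'B; rewrite (HB2 _ _ (Bt1 _ zB) _ (ehom _ _ e)) // z'st.
  move: z'st; rewrite inE => /orP[/eqP h | h].
    by exists z' => //; rewrite inE eqxx.
  rewrite symG in h; case: (lift_nb _ _ h) => w e' hw; exists w => //.
  by rewrite inE symL e' orbT.
have adj_of : forall z z' w, z \in Bt -> z' \in st eL w -> eL z z' -> adjacent eL (st eL w) Bt.
  move=> z z' w zB z'w e; apply/existsP; exists z'; rewrite z'w /=.
  by apply/existsP; exists z; rewrite zB symL e.
have Ane : exists2 u0, phi u0 = v & adjacent eL (st eL u0) Bt.
  case: (surj v) => f hf.
  have : f \in Bt \/ exists2 u0, phi u0 = v & adjacent eL (st eL u0) Bt.
    apply: (conn_closed (P := fun p => p \in Bt \/ exists2 u0, phi u0 = v & adjacent eL (st eL u0) Bt)) (cL x0 f) => //; last by left.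
    move=> a b e; case=> [aB | ? //]; last by right.
    case: (step _ _ aB e) => [|[w hw bw]]; first by left.
    right; exists w => //; exact: adj_of bw e.
  case=> // fB; move: (HB1 _ (Bt1 _ fB)); by rewrite hf inE eqxx.
have BtC : forall u, phi u = v -> Bt \subset Ccomp eL u Bt.
  move=> u hu; apply/subsetP => z zB; apply/bigcupP; exists z => //.
  by rewrite in_comp preS ?Bt1 // connect0.
have aut_st : forall mu u p, graph_aut eL mu -> (mu p \in st eL (mu u)) = (p \in st eL u).
  move=> mu u p [bij he]; rewrite !inE he (inj_eq (bij_inj bij)) //.
have aut_connS : forall mu u p q, graph_aut eL mu ->
    connect (restrict eL (~: st eL u)) p q -> connect (restrict eL (~: st eL (mu u))) (mu p) (mu q).
  move=> mu u p q hmu; apply: conn_homo => a b; rewrite !restrictE !in_setC !aut_st //.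
  by case: hmu => _ ->.
have aut_connP : forall mu p q, graph_aut eL mu -> (forall z, phi (mu z) = phi z) ->
    connect (restrict eL (phi @^-1: B)) p q -> connect (restrict eL (phi @^-1: B)) (mu p) (mu q).
  move=> mu p q hmu hphi; apply: conn_homo => a b; rewrite !restrictE !inE !hphi.
  by case: hmu => _ ->.
have lifting : forall y, phi y \in B -> exists2 z, z \in Bt & phi z = phi y.
  move=> y yB; move: (HB3 _ _ (Bt1 _ x0Bt) yB).
  apply: (conn_closed (P := fun g => exists2 z, z \in Bt & phi z = g)); last by exists x0.
  move=> g g'; rewrite restrictE => /and3P[_ g'S e] [z zB hz].
  rewrite -hz in e; case: (lift_nb _ _ e) => z' e' hz'; exists z' => //.
  apply: Bt2 e' => //; rewrite hz'; apply: HB2 (Bt1 _ zB) _ _; first by move: g'S; rewrite inE.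
  exact: e.
case: (boolP [exists u1, exists u2, [&& phi u1 == v, phi u2 == v,
    adjacent eL (st eL u1) Bt, adjacent eL (st eL u2) Bt & u1 != u2]]); last first.
  move=> Hn; case: Ane => u0 hu0 adj0.
  have H1 : forall u, phi u = v -> adjacent eL (st eL u) Bt -> u = u0.
    move=> u hu adj; apply/eqP; apply/negPn/negP => hne; move/negP: Hn; apply.
    apply/existsP; exists u; apply/existsP; exists u0.
    by rewrite hu hu0 eqxx adj adj0 hne.
  right; exists u0; split => //.
  have sub1 : Ccomp eL u0 Bt \subset Bt.
    apply/subsetP => y /bigcupP [a aB]; rewrite in_comp => /andP[_ c].
    apply: (conn_closed (P := fun p => p \in Bt)) c => // p q; rewrite restrictE => /and3P[_ qS e] pB.
    case: (step _ _ pB e) => // [[w hw qw]].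
    have := H1 _ hw (adj_of _ _ _ pB qw e) => ew.
    by move: qS; rewrite in_setC -ew qw.
  apply/eqP; rewrite eqEsubset; apply/andP; split; last by apply: bigcap_inf; rewrite hu0.
  apply: subset_trans sub1 _; apply/bigcapsP => u /eqP; exact: BtC.
case/existsP => u1 /existsP [u2 /and5P [/eqP hu1 /eqP hu2 adj1 adj2 u12]].
have L2 : forall y u, phi y \in B -> phi u = v ->
    exists w, [/\ phi w = v, w != u & adjacent eL (st eL w) (compo eL (phi @^-1: B) y)].
  move=> y u yB hu; case: (lifting _ yB) => z zB hz.
  case: (reg _ _ hz) => mu [hmu hphi hzy].
  have [ui [hui uiu adji]] : exists ui, [/\ phi ui = v, mu ui != u & adjacent eL (st eL ui) Bt].
    case: (eqVneq (mu u1) u) => h1; last by exists u1.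
    exists u2; split => //; rewrite -h1; apply/negP => /eqP /(bij_inj hmu.1) h.
    by rewrite h eqxx in u12.
  exists (mu ui); split => //; first by rewrite hphi.
  case/existsP: adji => a /andP [ast /existsP [b /andP [bB e]]].
  apply/existsP; exists (mu a); rewrite aut_st // ast /=.
  apply/existsP; exists (mu b); rewrite hmu.2 e andbT in_comp inE hphi Bt1 //=.
  by rewrite -hzy; apply: aut_connP => //; apply: Bt3.
have key : forall n u x y, phi u = v -> phi x \in B -> phi y \in B ->
    #|compo eL (~: st eL u) y| <= n -> connect (restrict eL (~: st eL u)) y x.
  elim=> [|n IH] u x y hu xB yB hc.
    have yK : y \in compo eL (~: st eL u) y by rewrite in_comp preS // connect0.
    by move: hc; rewrite leqn0 => /eqP /card0_eq /(_ y); rewrite yK.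
  apply/idPn => Hnc.
  set S := ~: st eL u; set K := compo eL S y.
  have KS : forall p, p \in K -> p \in S by move=> p; rewrite in_comp => /andP[].
  case: (L2 _ _ yB hu) => w [hw wu adjw].
  have Kst : st eL w \subset K.
    case/existsP: adjw => a /andP [aw /existsP [b /andP [bB e]]].
    move: bB; rewrite in_comp => /andP [bpre cb].
    have stS : st eL w \subset S.
      apply/subsetP => q qw; rewrite in_setC; apply/negP => qu.
      by move/eqP: wu; apply; apply: (disj _ _ q hw hu).
    have cyb : connect (restrict eL S) y b.
      apply: conn_mono cb => p q; rewrite !restrictE => /and3P [pB qB ->].
      move: pB qB; rewrite !preE => pB qB; by rewrite /S !preS.
    apply/subsetP => q qw; rewrite in_comp (subsetP stS _ qw) /=.
    apply: connect_trans cyb _; apply: (@connect_trans _ _ a).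
      by apply: connect1; rewrite restrictE (subsetP stS _ aw) symL e /S preS // -preE.
    apply: (@connect_trans _ _ w); last exact: st_conn.
    by rewrite restrict_csym //; apply: st_conn.
  have uK : forall p, p \in st eL u -> p \notin K.
    by move=> p pu; apply/negP => /KS; rewrite /S in_setC pu.
  have I : forall p, p \in K \/ connect (restrict eL (~: K)) u p.
    move=> p; apply: (conn_closed (P := fun p => p \in K \/ connect (restrict eL (~: K)) u p)) (cL u p); last by right.
    move=> a b e /= Ia; case bK: (b \in K); first by left.
    right; case bu: (b \in st eL u).
      apply: st_conn => //; apply/subsetP => q qu; rewrite in_setC; exact: uK.
    case: Ia => [aK | ca].
      suff : b \in K by rewrite bK.
      move: aK; rewrite !in_comp => /andP [aS c]; rewrite /S in_setC bu /=.
      by apply: connect_trans c (connect1 _); rewrite restrictE aS e /S in_setC bu.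
    apply: (connect_trans ca (connect1 _)); rewrite restrictE e andbT !in_setC bK andbT.
    have : u \in ~: K by rewrite in_setC uK // inE eqxx.
    by move/(restrict_in ca); rewrite in_setC.
  have hwu : phi w = phi u by rewrite hw hu.
  case: (reg _ _ hwu) => nu [hnu hphin hnw].
  case: hnu.1 => g c1 c2.
  have phig : forall p, phi (g p) = phi p by move=> p; rewrite -{2}(c2 p) hphin.
  have xB' : phi (g x) \in B by rewrite phig.
  have yB' : phi (g y) \in B by rewrite phig.
  have Hnc' : ~~ connect (restrict eL (~: st eL w)) (g y) (g x).
    apply/negP => c; move/negP: Hnc; apply.
    by move: (aut_connS nu w _ _ hnu c); rewrite hnw !c2.
  have wK : w \in K by apply: (subsetP Kst); rewrite inE eqxx.
  have small : forall t, compo eL (~: st eL w) t \subset K -> #|compo eL (~: st eL w) t| <= n.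
    move=> t sub; rewrite -ltnS; apply: leq_trans hc; apply: proper_card.
    rewrite properE sub /=; apply/negP => /subsetP /(_ _ wK).
    by rewrite in_comp in_setC inE eqxx.
  case: (boolP (compo eL (~: st eL w) (g y) \subset K)) => [sub|/subsetPn [p pc pK]].
    by move/negP: Hnc'; apply; exact: (IH w (g x) (g y) hw xB' yB' (small _ sub)).
  case: (boolP (compo eL (~: st eL w) (g x) \subset K)) => [sub|/subsetPn [q qc qK]].
    move/negP: Hnc'; apply; rewrite restrict_csym //.
    exact: (IH w (g y) (g x) hw yB' xB' (small _ sub)).
  case: (I p) => [pK'|cp]; first by rewrite pK' in pK.
  case: (I q) => [qK'|cq]; first by rewrite qK' in qK.
  have sub : forall a b, restrict eL (~: K) a b -> restrict eL (~: st eL w) a b.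
    move=> a b; rewrite !restrictE !in_setC => /and3P [aK bK ->]; rewrite andbT.
    by apply/andP; split; apply/negP => /(subsetP Kst) h; [rewrite h in aK | rewrite h in bK].
  move/negP: Hnc'; apply; move: pc qc; rewrite !in_comp => /andP[_ d1] /andP[_ d2].
  apply: (connect_trans d1); apply: (@connect_trans _ _ q); last by rewrite restrict_csym.
  apply: (conn_mono sub); apply: (@connect_trans _ _ u); first by rewrite restrict_csym.
  exact: cq.
left; apply/subsetP => x; rewrite preE => xB.
apply/bigcapP => u /eqP hu; apply/bigcupP; exists x0 => //.
by rewrite in_comp preS //; apply: (key _ u x x0 hu xB x0B (leqnn _)).
Qed.
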